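(* A morphism $m:A\to Z$ of $\mathbf{iRel}$ is a monomorphism in $\mathbf{iRel}$ if and only if it is total, i.e. $m(a)\neq\emptyset$ for every $a\in A$.
   Context: A binary relation $R:A\to Z$ (i.e. $R\subseteq A\times Z$; write $aRz$ for $\langle a,z\rangle\in R$) is injective if $aRz$ and $a'Rz$ imply $a=a'$. $\mathbf{iRel}$ is the category of sets and injective relations, with relational composition. For $a\in A$, $m(a)=\{z\in Z: amz\}$. *)

(* Defs.v *)
(* The category iRel: objects are sets (Rocq types),
   morphisms A -> Z are relations R ⊆ A × Z, i.e. R : A -> Z -> Prop. *)

Definition rel_eq {A Z : Type} (R S : A -> Z -> Prop) : Prop :=
  forall a z, R a z <-> S a z.

Definition rel_comp {X A Z : Type} (m : A -> Z -> Prop) (f : X -> A -> Prop)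
  : X -> Z -> Prop :=
  fun x z => exists a, f x a /\ m a z.

Definition injective_rel {A Z : Type} (R : A -> Z -> Prop) : Prop :=
  forall a a' z, R a z -> R a' z -> a = a'.

Definition iRel_mono {A Z : Type} (m : A -> Z -> Prop) : Prop :=
  forall (X : Type) (f g : X -> A -> Prop),
    injective_rel f -> injective_rel g ->
    rel_eq (rel_comp m f) (rel_comp m g) -> rel_eq f g.

Definition total_rel {A Z : Type} (m : A -> Z -> Prop) : Prop :=
  forall a, exists z, m a z.

(* Main.v *)
Require Import Defs.
From Stdlib Require Import Classical.

Theorem mainTheorem2 (A Z : Type) (m : A -> Z -> Prop) (hm : injective_rel m) :
  iRel_mono m <-> total_rel m.
Proof.
  split.
  - intros Hmono a.
    apply NNPP; intro Hn.
    assert (Hno : forall z, ~ m a z) by (intros z Hz; apply Hn; exists z; exact Hz).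
    pose (f := fun (_ : unit) (b : A) => b = a).
    pose (g := fun (_ : unit) (_ : A) => False).
    assert (H : rel_eq f g).
    { apply (Hmono unit f g).
      - intros [] [] z _ _; reflexivity.
      - intros u u' z Hb. destruct Hb.
      - intros x z; split.
        + intros [b [Hb Hm]]. unfold f in Hb. subst b. exfalso; exact (Hno z Hm).
        + intros [b [Hb _]]. destruct Hb. }
    destruct (H tt a) as [H1 _]. apply H1. reflexivity.
  - intros Ht X f g _ _ Heq x a; split; intro Hf.
    + destruct (Ht a) as [z Hz].
      destruct (proj1 (Heq x z) (ex_intro _ a (conj Hf Hz))) as [a' [Hg Hm]].
      rewrite (hm a a' z Hz Hm). exact Hg.
    + destruct (Ht a) as [z Hz].
      destruct (proj2 (Heq x z) (ex_intro _ a (conj Hf Hz))) as [a' [Hg Hm]].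
      rewrite (hm a a' z Hz Hm). exact Hg.
Qed.
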